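(* Suppose Assumption A1 holds, and let $I=(\bar x,\bar x+\varepsilon)$ be an interval as in the conclusion of Theorem 2 (i.e. $\varepsilon>0$, $s$ is differentiable and strictly monotone on $I$, and for all $x\in I$, $|s'(x)|=f_{X\mid I}(x)/f_{s(X)\mid I}(s(x))$ with $f_{s(X)\mid I}(s(x))$ existing and nonzero). Let $\theta:=\operatorname{sgn}(s'(\bar x^+))$. Then the limit $f_{s(X)\mid I}(s(\bar x^+)):=\lim_{x\downarrow\bar x}f_{s(X)\mid I}(s(x))$ exists and is nonzero, and $$\mathrm{AME}^+_{\bar x}=m'(\bar x^+)-\theta\cdot\frac{f_{X\mid I}(\bar x^+)}{f_{s(X)\mid I}(s(\bar x^+))},$$ where $f_{X\mid I}(\bar x^+)=f_X(\bar x^+)/P(X\in I)$.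
   Context: Setting. Fix a probability space and a real number $\bar x$. For each real $x\ge\bar x$ there is a real random variable $Y(x)$; $X$ is a real random variable with $X\ge\bar x$ a.s. and $P(X=\bar x)>0$; $Y=Y(X)$. All random variables whose conditional expectations are taken are integrable; conditional expectations given $X=x$ denote fixed versions regarded as functions of $x$. Notation: for $g$ on a right neighbourhood of $\bar x$, $g(\bar x^+):=\lim_{x\downarrow\bar x}g(x)$, $g'(\bar x^+):=\lim_{x\downarrow\bar x}\frac{g(x)-g(\bar x^+)}{x-\bar x}$. For an event $S$ with $P(S)>0$, $f_{V\mid S}$ is the derivative of $v\mapsto P(V\le v\mid S)$ where it exists; $f_{X\mid I}(x)=f_X(x)/P(X\in I)$. $\operatorname{sgn}(v)=\mathbf 1(v\ge0)-\mathbf 1(v\le0)$. Definitions: $\mathrm{ATT}(x):=E[Y(x)-Y(\bar x)\mid X=x]$; $\mathrm{AME}^+_{\bar x}:=\lim_{x\downarrow\bar x}\frac{\mathrm{ATT}(x)}{x-\bar x}$; for $x>\bar x$, $m(x):=E[Y\mid X=x]-E[Y\mid X=\bar x^+]$, $s(x):=E[Y(\bar x)\mid X=x]-E[Y(\bar x)\mid X=\bar x^+]$. Assumption A1: (i) for some $\varepsilon_1>0$, $X$ has a density $f_X$ that exists and is continuous on $(\bar x,\bar x+\varepsilon_1)$, and $f_X(\bar x^+)$ exists and is strictly positive; (ii) $x\mapsto E[Y\mid X=x]$ is differentiable on $(\bar x,\bar x+\varepsilon_2)$ for some $\varepsilon_2>0$, and $E[Y\mid X=\bar x^+]$ and $\lim_{x\downarrow\bar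 x}\frac{d}{dx}E[Y\mid X=x]$ exist; (iii) $x\mapsto E[Y(\bar x)\mid X=x]$ is differentiable on $(\bar x,\bar x+\varepsilon_3)$ for some $\varepsilon_3>0$, and $\lim_{x\downarrow\bar x}\frac{d}{dx}E[Y(\bar x)\mid X=x]$ exists and is nonzero; (iv) $\mathrm{ATT}(\bar x^+)=0$ and $\mathrm{ATT}'(\bar x^+)$ exists. *)

(* Defs.v *)
From HB Require Import structures.
From mathcomp Require Import all_boot all_order all_algebra.
From mathcomp Require Import all_classical all_reals all_analysis.
Set Implicit Arguments. Unset Strict Implicit. Unset Printing Implicit Defensive.
Import Order.TTheory GRing.Theory Num.Theory.
Import numFieldNormedType.Exports.
Local Open Scope classical_set_scope.
Local Open Scope ring_scope.

Definition sgn {R : realType} (v : R) : R := ((0 <= v)%R)%:R - ((v <= 0)%R)%:R.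

(* right difference quotient (g(x) - g(a^+)) / (x - a); g'(a^+) is its limit at a^+ *)
Definition rquot {R : realType} (g : R -> R) (a : R) : R -> R :=
  fun x => (g x - lim (g z @[z --> a^'+])) / (x - a).

Definition cond_cdf d (T : measurableType d) (R : realType) (P : probability T R)
  (V : T -> R) (S : set T) (v : R) : R :=
  fine (P ([set w | V w <= v] `&` S)) / fine (P S).

Definition is_cond_exp_version d (T : measurableType d) (R : realType)
  (P : probability T R) (X : T -> R) (Z : T -> R) (phi : R -> R) : Prop :=
  measurable_fun setT phi /\
  forall B : set R, measurable B ->
    (\int[P]_(w in X @^-1` B) (Z w)%:E = \int[P]_(w in X @^-1` B) (phi (X w))%:E)%E.

(* A coherent choice of fixed versions CE Z x = E[Z | X = x] for integrable Z:
   each CE Z is a version; the chosen versions are linear, and E[Z | X = x]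
   only depends on the values of Z on the event {X = x}. *)
Definition fixed_cond_exp d (T : measurableType d) (R : realType)
  (P : probability T R) (X : T -> R) (CE : (T -> R) -> R -> R) : Prop :=
  (forall Z, P.-integrable setT (EFin \o Z) -> is_cond_exp_version P X Z (CE Z)) /\
  (forall Z1 Z2, P.-integrable setT (EFin \o Z1) -> P.-integrable setT (EFin \o Z2) ->
     forall x, CE (Z1 \- Z2) x = CE Z1 x - CE Z2 x) /\
  (forall Z1 Z2, P.-integrable setT (EFin \o Z1) -> P.-integrable setT (EFin \o Z2) ->
     forall x, (forall w, X w = x -> Z1 w = Z2 w) -> CE Z1 x = CE Z2 x).

(* Main.v *)
Require Import Defs.
From HB Require Import structures.
From mathcomp Require Import all_boot all_order all_algebra.
From mathcomp Require Import all_classical all_reals all_analysis.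
Import Order.TTheory GRing.Theory Num.Theory.
Import numFieldNormedType.Exports.
Local Open Scope classical_set_scope.
Local Open Scope ring_scope.
From mathcomp Require Import ring lra.
Lemma rquot_cvg (R : realType) (F : R -> R) (a e l : R) : 0 < e ->
  (forall x, a < x < a + e -> derivable F x 1) -> cvg (F z @[z --> a^'+]) ->
  derive1 F z @[z --> a^'+] --> l -> rquot F a z @[z --> a^'+] --> l.
Proof.
move=> e0 dF cF dFl.
have ab : a < a + e by rewrite ltrDl.
set c := lim (F z @[z --> a^'+]).
apply: (@lhopital_at_right R (F - cst c) (derive1 F)
   ((fun x : R => x) - cst a) (fun=> 1) a (a + e)) => //.
- move=> x; rewrite in_itv /= => /dF Fx.
  rewrite derive1E -[X in is_derive _ _ _ X]subr0.
  exact: is_deriveB (derivableP Fx) (is_derive_cst _ _ _).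
- move=> x _; rewrite -[X in is_derive _ _ _ X]subr0.
  exact: is_deriveB (is_derive_id _ _) (is_derive_cst _ _ _).
- rewrite -(subrr c); apply: cvgB => //; exact: cvg_cst.
- rewrite -(subrr a); apply: cvgB; [exact: cvg_at_right_filter|exact: cvg_cst].
- by under eq_fun do rewrite divr1.
Qed.
Lemma sgn_normr (R : realType) (v : R) : sgn v * `|v| = v.
Proof.
rewrite /sgn; case: (ltgtP v 0) => [v0|v0|->]; last by rewrite normr0 mulr0.
- by rewrite ltr0_norm //= sub0r mulN1r opprK.
- by rewrite gtr0_norm //= subr0 mul1r.
Qed.
Theorem theorem3 (d : measure_display) (T : measurableType d) (R : realType)
  (P : probability T R) (xbar : R) (X : T -> R) (Yf : R -> T -> R)
  (CE : (T -> R) -> R -> R) (fX : R -> R) (eps1 eps2 eps3 eps : R) :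
  let Y := fun w => Yf (X w) w in
  let g := CE Y in
  let h := CE (Yf xbar) in
  let ATT := fun x => CE (Yf x \- Yf xbar) x in
  let m := fun x => g x - lim (g z @[z --> xbar^'+]) in
  let s := fun x => h x - lim (h z @[z --> xbar^'+]) in
  let I := [set x | xbar < x < xbar + eps] in
  let G := cond_cdf P (s \o X) (X @^-1` I) in
  (* setting *)
  measurable_fun setT X ->
  P [set w | X w < xbar] = 0%E ->
  (0 < P (X @^-1` [set xbar]))%E ->
  P.-integrable setT (EFin \o Y) ->
  P.-integrable setT (EFin \o Yf xbar) ->
  (forall x, xbar <= x -> P.-integrable setT (EFin \o (Yf x \- Yf xbar))) ->
  fixed_cond_exp P X CE ->
  (* A1 (i) *)
  0 < eps1 ->
  (forall x, xbar < x < xbar + eps1 ->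
     is_derive x 1 (fun v => fine (P [set w | X w <= v])) (fX x) /\ {for x, continuous fX}) ->
  cvg (fX z @[z --> xbar^'+]) ->
  0 < lim (fX z @[z --> xbar^'+]) ->
  (* A1 (ii) *)
  0 < eps2 ->
  (forall x, xbar < x < xbar + eps2 -> derivable g x 1) ->
  cvg (g z @[z --> xbar^'+]) ->
  cvg (derive1 g z @[z --> xbar^'+]) ->
  (* A1 (iii) *)
  0 < eps3 ->
  (forall x, xbar < x < xbar + eps3 -> derivable h x 1) ->
  cvg (derive1 h z @[z --> xbar^'+]) ->
  lim (derive1 h z @[z --> xbar^'+]) != 0 ->
  (* A1 (iv) *)
  ATT z @[z --> xbar^'+] --> 0 ->
  cvg (rquot ATT xbar z @[z --> xbar^'+]) ->
  (* conclusion of Theorem 2 on I = (xbar, xbar + eps) *)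
  0 < eps ->
  (forall x, I x -> derivable s x 1) ->
  ((forall x y, I x -> I y -> x < y -> s x < s y) \/
   (forall x y, I x -> I y -> x < y -> s y < s x)) ->
  (forall x, I x ->
     derivable G (s x) 1 /\ derive1 G (s x) != 0 /\
     `|derive1 s x| = (fX x / fine (P (X @^-1` I))) / derive1 G (s x)) ->
  (* conclusion *)
  exists L : R,
    L != 0 /\
    derive1 G (s z) @[z --> xbar^'+] --> L /\
    cvg (rquot m xbar z @[z --> xbar^'+]) /\
    cvg (rquot s xbar z @[z --> xbar^'+]) /\
    ATT z / (z - xbar) @[z --> xbar^'+] -->
      lim (rquot m xbar z @[z --> xbar^'+])
      - sgn (lim (rquot s xbar z @[z --> xbar^'+]))
        * ((lim (fX z @[z --> xbar^'+]) / fine (P (X @^-1` I))) / L).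
Proof.
move=> Y g h ATT m s I G mX PXlt PX0 intY intY0 intD [_ [Hlin Hloc]] e10 A1i
  cfX fX0 e20 dg cg cdg e30 dh cdh dh0 ATT0 cATT e0 ds smono Hs.
set lg := lim (g z @[z --> xbar^'+]).
have hATT : forall x, xbar < x -> ATT x = g x - h x.
  move=> x xx.
  have iD : P.-integrable setT (EFin \o (Y \- Yf xbar)).
    have -> : EFin \o (Y \- Yf xbar) = ((EFin \o Y) \- (EFin \o Yf xbar))%E
      by apply/funext => w.
    exact: integrableB.
  rewrite /ATT (Hloc _ _ (intD x (ltW xx)) iD x); last first.
    by move=> w Xw; rewrite /= /Y Xw.
  exact: Hlin.
have hh : h z @[z --> xbar^'+] --> lg.
  have : (g z - ATT z) @[z --> xbar^'+] --> lg - 0 by apply: cvgB.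
  rewrite subr0; apply: cvg_trans; apply: near_eq_cvg; near=> z.
  rewrite hATT; first by ring.
  near: z; exact: nbhs_right_gt.
have lh : lim (h z @[z --> xbar^'+]) = lg by apply: cvg_lim.
have lm0 : lim (m z @[z --> xbar^'+]) = 0.
  apply: (cvg_lim (@Rhausdorff R)); rewrite -(subrr lg); apply: cvgB => //; exact: cvg_cst.
have ls0 : lim (s z @[z --> xbar^'+]) = 0.
  apply: (cvg_lim (@Rhausdorff R)); rewrite -(subrr lg) /s lh; apply: cvgB => //; exact: cvg_cst.
have rm : rquot m xbar = rquot g xbar.
  by apply/funext => x; rewrite /rquot lm0 subr0.
have rs : rquot s xbar = rquot h xbar.
  by apply/funext => x; rewrite /rquot ls0 subr0.
move: cdh dh0 cdg.
have [l ->] : exists l : R, lim (h^`()%classic z @[z --> xbar^'+]) = l by eexists.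
have [lm ->] : exists lm : R, lim (g^`()%classic z @[z --> xbar^'+]) = lm by eexists.
move=> cdh dh0 cdg.
have rsl : rquot s xbar z @[z --> xbar^'+] --> l.
  rewrite rs; have := @rquot_cvg _ _ _ _ _ e30 dh (cvgP _ hh) cdh; exact.
have rml : rquot m xbar z @[z --> xbar^'+] --> lm.
  rewrite rm; exact: (@rquot_cvg _ _ _ _ _ e20 dg cg cdg).
have dsh : \forall z \near xbar^'+, s^`()%classic z = h^`()%classic z.
  near=> z.
  have dhz : derivable h z 1.
    apply: dh; apply/andP; split; near: z; first exact: nbhs_right_gt.
    by apply: nbhs_right_lt; rewrite ltrDl.
  rewrite !derive1E.
  have H := is_deriveB (derivableP dhz) (is_derive_cst (lim (h z @[z --> xbar^'+])) z 1).
  by rewrite (@derive_val _ _ _ _ _ _ _ H) subr0.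
have dsl : s^`()%classic z @[z --> xbar^'+] --> l.
  apply: cvg_trans cdh; apply: near_eq_cvg; move: dsh; apply: filterS => z ->//.
have dsnz : \forall z \near xbar^'+, s^`()%classic z != 0.
  exact: (cvgr_neq0 _ dsl dh0).
have nI : \forall z \near xbar^'+, I z.
  near=> z; rewrite /I /=; apply/andP; split; near: z;
    [exact: nbhs_right_gt | by apply: nbhs_right_lt; rewrite ltrDl].
set c := fine (P (X @^-1` I)).
set fl := lim (fX z @[z --> xbar^'+]).
have c0 : c != 0.
  apply/negP => /eqP; rewrite /c => c0.
  have : \forall z \near xbar^'+, False.
    near=> z.
    have Iz : I z by near: z.
    have nz : s^`()%classic z != 0 by near: z.
    move: (Hs z Iz) => [_ [_ He]].
    by move: He; rewrite c0 invr0 mulr0 mul0r => /eqP; rewrite normr_eq0 (negbTE nz).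
  exact: filter_not_empty.
have k0 : fl / c != 0 by rewrite mulf_neq0 ?invr_eq0 // gt_eqF.
exists ((fl / c) / `|l|).
split; first by rewrite mulf_neq0 ?invr_eq0 ?normr_eq0.
split.
  have : fX z / c / `|s^`()%classic z| @[z --> xbar^'+] --> fl / c / `|l|.
    apply: cvgM; first by apply: cvgM => //; exact: cvg_cst.
    by apply: cvgV; [rewrite normr_eq0|exact: cvg_norm].
  apply: cvg_trans; apply: near_eq_cvg; near=> z.
  have Iz : I z by near: z.
  have nz : s^`()%classic z != 0 by near: z.
  move: (Hs z Iz) => [_ [Gnz He]].
  have a0 : fX z / c != 0.
    apply: contra nz => /eqP a0; by rewrite -normr_eq0 He a0 mul0r.
  by rewrite He divKf.
split; first exact: cvgP rml.
split; first exact: cvgP rsl.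
rewrite (cvg_lim (@Rhausdorff R) rml) (cvg_lim (@Rhausdorff R) rsl).
have -> : fl / c / (fl / c / `|l|) = `|l| by rewrite invf_div mulrC divfK.
rewrite (@sgn_normr R l).
have : rquot m xbar z - rquot s xbar z @[z --> xbar^'+] --> lm - l by apply: cvgB.
apply: cvg_trans; apply: near_eq_cvg; near=> z.
have xz : xbar < z by near: z; exact: nbhs_right_gt.
rewrite rm rs /rquot lh hATT // -mulrBl; congr (_ * _); rewrite -/lg; ring.
Unshelve. all: by end_near.
Qed.
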